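(* Let $p,q\ge2$ and let $\pi=(\pi_{u,v})$ be a probability law on $\{1,\dots,p\}\times\{1,\dots,q\}$ with margins $\pi_{u,\cdot}=\sum_v\pi_{u,v}$ and $\pi_{\cdot,v}=\sum_u\pi_{u,v}$. Let $(U_1,V_1)$ and $(U_2,V_2)$ be two independent draws from $\pi$. Then $$\pi_{u,v}=\frac{\pi_{u,\cdot}}{q}+\frac{\pi_{\cdot,v}}{p}-\frac{1}{pq}\quad\text{for all }u,v$$ if and only if the weighted expected number of agreements equals the weighted expected number of disagreements, namely $$\frac{\mathbb P(U_1=U_2,V_1=V_2)}{pq}+\frac{\mathbb P(U_1\ne U_2,V_1\ne V_2)}{p(p-1)q(q-1)}=\frac{\mathbb P(U_1=U_2,V_1\ne V_2)}{pq(q-1)}+\frac{\mathbb P(U_1\ne U_2,V_1=V_2)}{p(p-1)q}.$$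
   Context: An ''agreement'' between the two draws occurs when the two variables both coincide ($U_1=U_2$ and $V_1=V_2$) or both differ; a ''disagreement'' when exactly one coincides. The weights $pq$, $p(p-1)q(q-1)$, $pq(q-1)$, $p(p-1)q$ count the possible pairs of classes realizing each type. *)

(* Defs.v *)
From mathcomp Require Import all_boot all_order all_algebra.
Set Implicit Arguments. Unset Strict Implicit. Unset Printing Implicit Defensive.
Import Order.TTheory GRing.Theory Num.Theory.
Local Open Scope ring_scope.

(* A probability law on {1..p} x {1..q}, indices shifted to 'I_p x 'I_q. *)
Definition is_prob_law (R : realFieldType) (p q : nat) (pi : 'I_p -> 'I_q -> R) :=
  (forall u v, 0 <= pi u v) /\ \sum_(u < p) \sum_(v < q) pi u v = 1.

Definition marg1 (R : realFieldType) p q (pi : 'I_p -> 'I_q -> R) (u : 'I_p) : R :=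
  \sum_(v < q) pi u v.
Definition marg2 (R : realFieldType) p q (pi : 'I_p -> 'I_q -> R) (v : 'I_q) : R :=
  \sum_(u < p) pi u v.

(* Probability that two independent draws (U1,V1),(U2,V2) from pi satisfy
   (U1 == U2) = a and (V1 == V2) = b. *)
Definition pair_prob (R : realFieldType) p q (pi : 'I_p -> 'I_q -> R) (a b : bool) : R :=
  \sum_(u1 < p) \sum_(v1 < q) \sum_(u2 < p) \sum_(v2 < q)
    (if ((u1 == u2) == a) && ((v1 == v2) == b) then pi u1 v1 * pi u2 v2 else 0).

(* Main.v *)
Require Import Defs.
From mathcomp Require Import all_boot all_order all_algebra.
Import Order.TTheory GRing.Theory Num.Theory.
Local Open Scope ring_scope.
From mathcomp Require Import ring lra.

Section S.
Variable R : realFieldType.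

Lemma sum_if_eq n (j : 'I_n) (F : 'I_n -> R) :
  \sum_(i < n) (if j == i then F i else 0) = F j.
Proof. by rewrite -big_mkcond /= (big_pred1 j) // => i; rewrite /= eq_sym. Qed.

Lemma sum_if_eqT n (j : 'I_n) (F : 'I_n -> R) :
  \sum_(i < n) (if (j == i) == true then F i else 0) = F j.
Proof. by rewrite -sum_if_eq; apply: eq_bigr => i _; rewrite eqb_id. Qed.

Variables (p q : nat) (pi : 'I_p -> 'I_q -> R).
Let S := \sum_(u < p) \sum_(v < q) pi u v * pi u v.
Let A := \sum_(u < p) marg1 pi u * marg1 pi u.
Let B := \sum_(v < q) marg2 pi v * marg2 pi v.

Lemma pTT : pair_prob pi true true = S.
Proof.
rewrite /pair_prob /S; apply: eq_bigr => u1 _; apply: eq_bigr => v1 _.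
rewrite (eq_bigr (fun u2 => if u1 == u2 then pi u1 v1 * pi u2 v1 else 0)).
  by rewrite sum_if_eq.
move=> u2 _; have [<-|ne] := eqVneq u1 u2; rewrite /=.
  by rewrite sum_if_eqT.
by rewrite big1.
Qed.

Lemma pTTF : pair_prob pi true true + pair_prob pi true false = A.
Proof.
rewrite /pair_prob /A -big_split; apply: eq_bigr => u1 _.
rewrite -big_split /= /marg1 mulr_suml; apply: eq_bigr => v1 _.
rewrite -big_split /=.
rewrite (eq_bigr (fun u2 => if u1 == u2 then pi u1 v1 * marg1 pi u2 else 0)).
  by rewrite sum_if_eq /marg1 mulr_sumr.
move=> u2 _; rewrite -big_split /=.
have [<-|ne] := eqVneq u1 u2; rewrite /=.
  rewrite /marg1 mulr_sumr; apply: eq_bigr => v2 _.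
  by case: (v1 == v2); rewrite /= ?addr0 ?add0r.
by rewrite big1 // => v2 _; rewrite addr0.
Qed.

Lemma pTFT : pair_prob pi true true + pair_prob pi false true = B.
Proof.
rewrite /pair_prob /B -big_split /=.
under eq_bigr => u1 _ do rewrite -big_split /=.
rewrite exchange_big /=.
apply: eq_bigr => v1 _.
rewrite /marg2 mulr_suml; apply: eq_bigr => u1 _.
rewrite -big_split /=.
under eq_bigr => u2 _ do rewrite -big_split /=.
rewrite exchange_big /=.
rewrite (eq_bigr (fun v2 => if v1 == v2 then pi u1 v1 * marg2 pi v2 else 0)).
  by rewrite sum_if_eq /marg2 mulr_sumr.
move=> v2 _.
have [<-|ne] := eqVneq v1 v2; rewrite /=.
  rewrite /marg2 mulr_sumr; apply: eq_bigr => u2 _.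
  by case: (u1 == u2); rewrite /= ?addr0 ?add0r.
by rewrite big1 // => u2 _; rewrite !andbF addr0.
Qed.

Lemma pall : is_prob_law pi -> pair_prob pi true true + pair_prob pi true false
   + pair_prob pi false true + pair_prob pi false false = 1.
Proof.
case=> _ H1; rewrite /pair_prob -!big_split /=.
have -> : (1:R) = (\sum_(u < p) \sum_(v < q) pi u v) * (\sum_(u < p) \sum_(v < q) pi u v) by rewrite H1 mulr1.
rewrite mulr_suml; apply: eq_bigr => u1 _.
rewrite -!big_split /= mulr_suml; apply: eq_bigr => v1 _.
rewrite -!big_split /= mulr_sumr; apply: eq_bigr => u2 _.
rewrite -!big_split /= mulr_sumr; apply: eq_bigr => v2 _.
by case: (u1 == u2); case: (v1 == v2); rewrite /= ?addr0 ?add0r.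
Qed.
Definition rr u v := pi u v - marg1 pi u / q%:R - marg2 pi v / p%:R + 1 / (p * q)%:R.

Hypothesis hp : (0 < p)%N.
Hypothesis hq : (0 < q)%N.
Hypothesis hpi : is_prob_law pi.

Lemma pR : p%:R != 0 :> R. Proof. by rewrite pnatr_eq0 -lt0n. Qed.
Lemma qR : q%:R != 0 :> R. Proof. by rewrite pnatr_eq0 -lt0n. Qed.

Lemma suma : \sum_(u < p) marg1 pi u = 1.
Proof. by case: hpi. Qed.
Lemma sumb : \sum_(v < q) marg2 pi v = 1.
Proof. by case: hpi => _ <-; rewrite /marg2 exchange_big. Qed.

Lemma row0 u : \sum_(v < q) rr u v = 0.
Proof.
rewrite /rr big_split /= !sumrB -[\sum_(i < q) marg2 pi i / p%:R]mulr_suml sumb !sumr_const card_ord -/(marg1 pi u).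
rewrite natrM; field; rewrite pR qR //.
Qed.

Lemma col0 v : \sum_(u < p) rr u v = 0.
Proof.
rewrite /rr big_split /= !sumrB -[\sum_(i < p) marg1 pi i / q%:R]mulr_suml suma !sumr_const card_ord -/(marg2 pi v).
rewrite natrM; field; rewrite pR qR //.
Qed.

Lemma sum_r2 : \sum_(u < p) \sum_(v < q) rr u v * rr u v
  = S - A / q%:R - B / p%:R + 1 / (p * q)%:R.
Proof.
have E : forall u v, rr u v * rr u v = rr u v * pi u v - (rr u v * marg1 pi u / q%:R)
   - (rr u v * marg2 pi v / p%:R) + rr u v * (1 / (p * q)%:R).
  by move=> u v; rewrite {1}/rr; ring.
under eq_bigr => u _ do under eq_bigr => v _ do rewrite E.
have T1 : \sum_(u < p) \sum_(v < q) rr u v * marg1 pi u / q%:R = 0.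
  by rewrite big1 // => u _; rewrite -!mulr_suml row0 !mul0r.
have T2 : \sum_(u < p) \sum_(v < q) rr u v * marg2 pi v / p%:R = 0.
  by rewrite exchange_big big1 //= => v _; rewrite -!mulr_suml col0 !mul0r.
have T3 : \sum_(u < p) \sum_(v < q) rr u v * (1 / (p * q)%:R) = 0.
  by rewrite big1 // => u _; rewrite -!mulr_suml row0 !mul0r.
have T4a : \sum_(u < p) \sum_(v < q) marg1 pi u / q%:R * pi u v = A / q%:R.
  rewrite /A mulr_suml; apply: eq_bigr => u _; rewrite -mulr_sumr -/(marg1 pi u).
  by rewrite mulrAC.
have T4b : \sum_(u < p) \sum_(v < q) marg2 pi v / p%:R * pi u v = B / p%:R.
  rewrite exchange_big /B mulr_suml; apply: eq_bigr => v _ /=; rewrite -mulr_sumr -/(marg2 pi v).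
  by rewrite mulrAC.
have T4c : \sum_(u < p) \sum_(v < q) 1 / (p * q)%:R * pi u v = 1 / (p * q)%:R.
  by rewrite -[RHS]mulr1; case: hpi => _ <-; rewrite mulr_sumr; apply: eq_bigr => u _; rewrite -mulr_sumr.
have T4 : \sum_(u < p) \sum_(v < q) rr u v * pi u v = S - A / q%:R - B / p%:R + 1 / (p * q)%:R.
  rewrite /rr.
  under eq_bigr => u _ do under eq_bigr => v _ do rewrite !mulrDl !mulNr.
  under eq_bigr => u _ do rewrite !big_split /= !sumrN.
  by rewrite !big_split /= !sumrN T4a T4b T4c.
under eq_bigr => u _ do rewrite big_split /= !sumrB.
by rewrite big_split /= !sumrB T1 T2 T3 T4 !subr0 addr0.
Qed.
End S.

Theorem theorem6 (R : realFieldType) (p q : nat) (pi : 'I_p -> 'I_q -> R) :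
  (2 <= p)%N -> (2 <= q)%N -> is_prob_law pi ->
  (forall u v, pi u v = marg1 pi u / q%:R + marg2 pi v / p%:R - 1 / (p * q)%:R)
  <->
  pair_prob pi true true / (p * q)%:R
    + pair_prob pi false false / (p * (p - 1) * q * (q - 1))%:R
  = pair_prob pi true false / (p * q * (q - 1))%:R
    + pair_prob pi false true / (p * (p - 1) * q)%:R.
Proof.
move=> hp2 hq2 hpi.
have hp : (0 < p)%N by apply: leq_trans hp2.
have hq : (0 < q)%N by apply: leq_trans hq2.
have hp1 : (1 <= p)%N by [].
have hq1 : (1 <= q)%N by [].
have p0 : p%:R != 0 :> R by rewrite pnatr_eq0 -lt0n.
have q0 : q%:R != 0 :> R by rewrite pnatr_eq0 -lt0n.
have p1 : p%:R - 1 != 0 :> R.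
  by rewrite subr_eq0 pnatr_eq1; apply/eqP => e; rewrite e in hp2.
have q1 : q%:R - 1 != 0 :> R.
  by rewrite subr_eq0 pnatr_eq1; apply/eqP => e; rewrite e in hq2.
have eTT := @pTT R p q pi. have eTF := @pTTF R p q pi. have eFT := @pTFT R p q pi. have eall := @pall R p q pi hpi.
set S := \sum_(u < p) \sum_(v < q) pi u v * pi u v in eTT eTF eFT.
set A := \sum_(u < p) marg1 pi u * marg1 pi u in eTF.
set B := \sum_(v < q) marg2 pi v * marg2 pi v in eFT.
have hS := @sum_r2 R p q pi hp hq hpi.
set X := S - A / q%:R - B / p%:R + 1 / (p * q)%:R in hS.
have key : pair_prob pi true true / (p * q)%:R
    + pair_prob pi false false / (p * (p - 1) * q * (q - 1))%:R
  - (pair_prob pi true false / (p * q * (q - 1))%:R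
    + pair_prob pi false true / (p * (p - 1) * q)%:R)
  = X / ((p%:R - 1) * (q%:R - 1)).
  have -> : pair_prob pi true false = A - S by rewrite -eTF eTT addrC addKr.
  have -> : pair_prob pi false true = B - S by rewrite -eFT eTT addrC addKr.
  have -> : pair_prob pi false false = 1 - A - B + S.
    by rewrite -eall -eTF -eFT eTT; ring.
  rewrite eTT /X !natrM !natrB //; field.
  by rewrite p0 q0 p1 q1.
split.
- move=> H.
  have r0 : forall u v, @rr R p q pi u v = 0 by move=> u v; rewrite /rr {1}(H u v); ring.
  have X0 : X = 0.
    by rewrite -hS big1 // => u _; rewrite big1 // => v _; rewrite r0 mul0r.
  by apply/eqP; rewrite -subr_eq0 key X0 mul0r.
- move=> E.
  have X0 : X = 0.
    move: key; rewrite E subrr => /esym /eqP; rewrite mulf_eq0 invr_eq0 mulf_eq0.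
    by rewrite (negbTE p1) (negbTE q1) /= orbF => /eqP.
  have r0 : forall u v, @rr R p q pi u v = 0.
    have hsum : \sum_(u < p) \sum_(v < q) @rr R p q pi u v * @rr R p q pi u v = 0.
      by rewrite hS X0.
    have sq : forall x : R, 0 <= x * x by move=> x; rewrite -expr2 sqr_ge0.
    have hrow := psumr_eq0P (fun u _ => sumr_ge0 _ (fun v _ => sq (@rr R p q pi u v))) hsum.
    move=> u v.
    have h2 := @psumr_eq0P R _ xpredT _ (fun v _ => sq (@rr R p q pi u v)) (hrow u isT) v isT.
    by move/eqP: h2; rewrite mulf_eq0 orbb => /eqP.
  move=> u v; have : pi u v - (marg1 pi u / q%:R + marg2 pi v / p%:R - 1 / (p * q)%:R) = @rr R p q pi u v.
    by rewrite /rr; ring.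
  by rewrite r0 => /eqP; rewrite subr_eq0 => /eqP.
Qed.
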